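(* Let $m\le k\le n$ be positive integers and $\mathbf a_1,\dots,\mathbf a_n\in\mathbb R^m$, and let $w^*=\max\{[\det(\sum_{i\in S}\mathbf a_i\mathbf a_i^\top)]^{1/m}: S\subseteq[n],|S|=k\}$. Let $(\hat{\mathbf x},\hat w)$ be an optimal solution of the convex relaxation $$\max_{\mathbf x,w}\Big\{w:\ w\le \Big[\det\Big(\sum_{i\in[n]}x_i\mathbf a_i\mathbf a_i^\top\Big)\Big]^{1/m},\ \sum_{i\in[n]}x_i=k,\ \mathbf x\in[0,1]^n\Big\},$$ and let $\mathcal S$ be the random size-$k$ subset of $[n]$ (the output of the sampling algorithm) with $$\Pr[\mathcal S=S]=\frac{\prod_{j\in S}\hat x_j}{\sum_{\bar S\subseteq[n],|\bar S|=k}\prod_{i\in\bar S}\hat x_i}\quad\text{for every } S\subseteq[n],\ |S|=k.$$ Then this algorithm is a $\frac1e$-approximation, i.e. $$\Big\{\mathbb E\Big[\det\Big(\sum_{i\in\mathcal S}\mathbf a_i\mathbf a_i^\top\Big)\Big]\Big\}^{1/m}\ge \frac1e\,w^*.$$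
   Context: $[n]=\{1,\dots,n\}$. This is the $D$-optimal design problem without repetitions: choose $k$ of the $n$ distinct vectors to maximize the $m$-th root of the determinant of the sum of their outer products; $w^*$ is its optimal value. *)

(* Defs.v *)
From HB Require Import structures.
From mathcomp Require Import all_boot all_order all_algebra.
From mathcomp Require Import all_classical all_reals all_analysis.
Set Implicit Arguments. Unset Strict Implicit. Unset Printing Implicit Defensive.
Import Order.TTheory GRing.Theory Num.Theory.
Local Open Scope ring_scope.

Section Dopt.
Variables (R : realType) (m n k : nat) (a : 'I_n -> 'cV[R]_m).

Definition mroot (t : R) : R := t `^ (m%:R^-1).

Definition detS (S : {set 'I_n}) : R :=
  \det (\sum_(i in S) (a i *m (a i)^T)).

Definition detx (x : 'I_n -> R) : R :=
  \det (\sum_(i < n) x i *: (a i *m (a i)^T)).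

(* w^* = max over size-k subsets of det(...)^{1/m} (all values are >= 0) *)
Definition wstar : R :=
  \big[Num.max/0]_(S : {set 'I_n} | #|S| == k) mroot (detS S).

Definition relax_feasible (x : 'I_n -> R) (w : R) : Prop :=
  [/\ w <= mroot (detx x), \sum_(i < n) x i = k%:R
    & forall i, 0 <= x i <= 1].

Definition relax_optimal (x : 'I_n -> R) (w : R) : Prop :=
  relax_feasible x w /\ forall x' w', relax_feasible x' w' -> w' <= w.

Definition sample_prob (x : 'I_n -> R) (S : {set 'I_n}) : R :=
  (\prod_(j in S) x j) /
  (\sum_(T : {set 'I_n} | #|T| == k) \prod_(i in T) x i).

Definition expected_det (x : 'I_n -> R) : R :=
  \sum_(S : {set 'I_n} | #|S| == k) sample_prob x S * detS S.

End Dopt.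

(* Main.v *)
Require Import Defs.
From HB Require Import structures.
From mathcomp Require Import all_boot all_order all_algebra.
From mathcomp Require Import all_classical all_reals all_analysis.
From mathcomp Require Import ring lra zify fingroup perm.
Import Order.TTheory GRing.Theory Num.Theory.
Import fintype finset.
Local Open Scope ring_scope.


Section Ex.
Variable R : realType.

Lemma exp_partial (t : R) N : 0 <= t ->
  \sum_(j < N) t ^+ j / j`!%:R <= expR t.
Proof.
move=> t0.
have := @nondecreasing_cvgn_le R (series (exp_coeff t)) _ (is_cvg_series_exp_coeff t) N.
rewrite /series /= big_mkord; apply.
apply: nondecreasing_series => j _ _; exact: exp_coeff_ge0.
Qed.

Lemma exp_term (u : R) p : 0 <= u -> u ^+ p / p`!%:R <= expR u.
Proof.
move=> u0; case: p => [|p].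
  by rewrite expr0 fact0 divr1 -[1]addr0 (le_trans _ (expR_ge1Dx u)) // lerD2l.
apply: le_trans (expR_ge1Dxn p u0); rewrite lerDr //.
Qed.

Lemma G_small (d u : R) p : 0 <= d -> p%:R <= u ->
  (d + u) ^+ p * p`!%:R <= u ^+ p * \prod_(i < p) (d + i.+1%:R).
Proof.
move=> d0; elim: p => [|p IH] hp.
  by rewrite big_ord0 fact0 !expr0 !mulr1.
have hp' : p%:R <= u by apply: le_trans hp; rewrite ler_nat.
have u0 : 0 <= u by apply: le_trans hp'.
rewrite big_ord_recr /= factS natrM !exprS.
have e1 : (d + u) * p.+1%:R <= u * (d + p.+1%:R).
  rewrite mulrDl mulrDr [u * _]mulrC lerD2r; rewrite [u * d]mulrC; by apply: ler_wpM2l.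
have := IH hp'.
set A := (d+u)^+p; set B := u^+p * _; set F := p`!%:R => IH'.
have A0 : 0 <= A by rewrite exprn_ge0 // addr_ge0.
have F0 : 0 <= F by [].
have H : A * F * ((d + u) * p.+1%:R) <= B * (u * (d + p.+1%:R)).
  by apply: ler_pM => //; [exact: mulr_ge0 | rewrite mulr_ge0 // addr_ge0].
have -> : (d + u) * A * (p.+1%:R * F) = A * F * ((d + u) * p.+1%:R) by ring.
apply: (le_trans H); rewrite /B le_eqVlt; apply/orP; left; apply/eqP; ring.
Qed.

Lemma G_bound (d u : R) p : 0 <= d -> 0 <= u ->
  (d + u) ^+ p <= expR u * \prod_(i < p) (d + i.+1%:R).
Proof.
move=> d0 u0; elim: p => [|p IH].
  by rewrite expr0 big_ord0 mulr1 -[1]addr0 (le_trans _ (expR_ge1Dx u)) // lerD2l.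
have P0 q : 0 < \prod_(i < q) (d + i.+1%:R).
  by apply: prodr_gt0 => i _; apply: ltr_wpDl.
case: (leP p.+1%:R u) => hp.
  have := @G_small d u p.+1 d0 hp; have := @exp_term u p.+1 u0.
  rewrite ler_pdivrMr ?ltr0n ?fact_gt0 // => h1 h2.
  rewrite -(@ler_pM2r _ p.+1`!%:R) ?ltr0n ?fact_gt0 //.
  apply: le_trans h2 _; rewrite mulrAC; apply: ler_wpM2r; first exact/ltW/P0.
  exact: h1.
rewrite big_ord_recr /= exprSr mulrA; apply: ler_pM => //.
- by rewrite exprn_ge0 // addr_ge0.
- by rewrite addr_ge0.
- by rewrite lerD2l; apply: ltW.
Qed.
End Ex.

Section Comb.
Context {R : realType} {n : nat} (x : 'I_n -> R).
Hypothesis x01 : forall i, 0 <= x i <= 1.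

Definition esym (V : {set 'I_n}) (l : nat) : R :=
  \sum_(S : {set 'I_n} | (S \subset V) && (#|S| == l)) \prod_(i in S) x i.
Definition sigx (V : {set 'I_n}) : R := \sum_(i in V) x i.

Lemma x_ge0 i : 0 <= x i. Proof. by case/andP: (x01 i). Qed.
Lemma x_le1 i : x i <= 1. Proof. by case/andP: (x01 i). Qed.
Lemma prod_ge0 (S : {set 'I_n}) : 0 <= \prod_(i in S) x i.
Proof. by apply: prodr_ge0 => i _; exact: x_ge0. Qed.

Lemma reidx (V : {set 'I_n}) (l : nat) (i : 'I_n) : i \in V ->
  \sum_(L : {set 'I_n} | ((L \subset V) && (#|L| == l)) && (i \in V :\: L))
     \prod_(j in i |: L) x j =
  \sum_(S : {set 'I_n} | ((S \subset V) && (#|S| == l.+1)) && (i \in S))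
     \prod_(j in S) x j.
Proof.
move=> iV; symmetry.
rewrite (reindex_onto (fun L => i |: L) (fun S => S :\ i)) /=; last first.
  by move=> S /andP[_ iS]; exact: finset.setD1K.
apply: eq_bigl => L.
case iL: (i \in L).
  have -> : ((i |: L) :\ i == L) = false.
    by apply/negbTE/negP => /eqP E; move: iL; rewrite -E !inE eqxx.
  by rewrite andbF finset.in_setD iL /= andbF.
rewrite (setU1K (negbT iL)) eqxx andbT cardsU1 iL finset.subUset finset.sub1set iV /=.
by rewrite finset.in_setD iL iV /= finset.setU11 andbT.
Qed.

Lemma dcount (V : {set 'I_n}) (l : nat) :
  \sum_(L : {set 'I_n} | (L \subset V) && (#|L| == l))
     \sum_(i in V :\: L) \prod_(j in i |: L) x j = l.+1%:R * esym V l.+1.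
Proof.
rewrite (exchange_big_dep (fun i => i \in V)) /=; last first.
  by move=> L i _; rewrite !inE => /andP[].
rewrite (eq_bigr (fun i => \sum_(S : {set 'I_n} | ((S \subset V) && (#|S| == l.+1)) && (i \in S))
     \prod_(j in S) x j)); last by move=> i iV; exact: reidx.
rewrite (exchange_big_dep (fun S : {set 'I_n} => (S \subset V) && (#|S| == l.+1))) /=; last first.
  by move=> i S _ /andP[].
rewrite /esym mulr_sumr; apply: eq_bigr => S /andP[SV /eqP cS].
transitivity (\sum_(i in S) \prod_(j in S) x j).
  apply: eq_bigl => i; rewrite SV cS eqxx /=.
  by apply/idP/idP => [/andP[]//| iS]; rewrite iS (subsetP SV).
by rewrite sumr_const cS mulr_natl.
Qed.

Lemma newton (V : {set 'I_n}) (l : nat) :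
  sigx V * esym V l = l.+1%:R * esym V l.+1 +
  \sum_(L : {set 'I_n} | (L \subset V) && (#|L| == l)) (\prod_(i in L) x i) * sigx L.
Proof.
rewrite -dcount /esym mulr_sumr -big_split /=; apply: eq_bigr => L /andP[LV _].
rewrite mulrC /sigx mulr_sumr (big_setID L) /= (finset.setIidPr LV) addrC; congr (_ + _).
  apply: eq_bigr => i; rewrite !inE => /andP[iL _].
  by rewrite big_setU1 /= ?iL // mulrC.
by rewrite mulr_sumr; apply: eq_bigr => i _; rewrite mulrC.
Qed.


Lemma prodU (A B : {set 'I_n}) : [disjoint A & B] ->
  \prod_(i in A :|: B) x i = (\prod_(i in A) x i) * \prod_(i in B) x i.
Proof.
move=> dAB; rewrite -bigU //; apply: eq_bigl => i; by rewrite !inE.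
Qed.

Lemma inner (T A : {set 'I_n}) (l : nat) : A \subset T -> (#|A| <= l)%N ->
  \sum_(S : {set 'I_n} | (#|S| == l) && (S :&: T == A)) \prod_(i in S) x i =
  (\prod_(i in A) x i) * esym (~: T) (l - #|A|).
Proof.
move=> AT Al.
rewrite /esym mulr_sumr.
rewrite (reindex_onto (fun B => A :|: B) (fun S => S :\: T)) /=; last first.
  move=> S /andP[_ /eqP <-]; apply/finset.setP => i; rewrite !inE.
  by case: (i \in T); case: (i \in S).
symmetry; apply: eq_big => B.
  case BT: (B \subset ~: T).
    have e1 : (A :|: B) :&: T = A.
      apply/finset.setP => i; rewrite !inE.
      case iA: (i \in A); first by rewrite (fintype.subsetP AT).
      case iB: (i \in B) => //=.
      by have := fintype.subsetP BT i iB; rewrite !inE => /negbTE ->.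
    have e2 : (A :|: B) :\: T = B.
      apply/finset.setP => i; rewrite !inE.
      case iB: (i \in B).
        by have := fintype.subsetP BT i iB; rewrite !inE => ->; rewrite orbT.
      case iA: (i \in A); last by rewrite andbF.
      by rewrite (fintype.subsetP AT i iA).
    have e3 : A :&: B = finset.set0.
      apply/finset.setP => i; rewrite !inE.
      case iB: (i \in B); last by rewrite andbF.
      have := fintype.subsetP BT i iB; rewrite !inE => /negbTE iT.
      by case iA: (i \in A) => //; move: iT; rewrite (fintype.subsetP AT).
    rewrite e1 e2 !eqxx andbT /= cardsU e3 finset.cards0 subn0.
    rewrite andbT; apply/eqP/eqP => [->|<-]; [exact: subnKC | by rewrite addKn].
  have [i iB iT] := fintype.subsetPn (negbT BT).
  have -> : ((A :|: B) :\: T == B) = false.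
    apply/negbTE/negP => /eqP E; move: iB; rewrite -E !inE.
    by move: iT; rewrite !inE negbK => ->.
  by rewrite andbF.
move=> /andP[BT _]; rewrite prodU //.
rewrite finset.disjoints_subset; apply: (fintype.subset_trans AT).
by rewrite -finset.disjoints_subset fintype.disjoint_sym finset.disjoints_subset.
Qed.


Lemma esym0 (V : {set 'I_n}) : esym V 0 = 1.
Proof.
rewrite /esym (big_pred1 finset.set0) ?finset.big_set0 // => S /=.
by rewrite finset.cards_eq0; case: eqP => [->|]; rewrite ?finset.sub0set ?andbF.
Qed.

Lemma esym_ge0 (V : {set 'I_n}) l : 0 <= esym V l.
Proof. by apply: sumr_ge0 => S _; exact: prod_ge0. Qed.

Lemma sig_ge0 (V : {set 'I_n}) : 0 <= sigx V.
Proof. by apply: sumr_ge0 => i _; exact: x_ge0. Qed.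

Lemma sig_le (V : {set 'I_n}) : sigx V <= #|V|%:R.
Proof.
apply: le_trans (ler_sum _ (fun i _ => x_le1 i)) _; by rewrite sumr_const.
Qed.

Lemma N1 (V : {set 'I_n}) l : l.+1%:R * esym V l.+1 <= sigx V * esym V l.
Proof.
rewrite newton lerDl; apply: sumr_ge0 => L _; apply: mulr_ge0; [exact: prod_ge0 | exact: sig_ge0].
Qed.

Lemma N2 (V : {set 'I_n}) l : (sigx V - l%:R) * esym V l <= l.+1%:R * esym V l.+1.
Proof.
rewrite mulrBl newton lerBlDr lerD2l /esym mulr_sumr; apply: ler_sum => L /andP[_ /eqP cL].
rewrite [l%:R * _]mulrC; apply: ler_wpM2l; first exact: prod_ge0.
by rewrite -cL; exact: sig_le.
Qed.

Lemma P1 (V : {set 'I_n}) d p :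
  esym V (d + p) * \prod_(i < p) (d%:R + i.+1%:R) <= sigx V ^+ p * esym V d.
Proof.
elim: p => [|p IH]; first by rewrite addn0 big_ord0 mulr1 expr0 mul1r.
rewrite big_ord_recr /= -natrD addnS mulrCA mulrC.
apply: le_trans (_ : sigx V * esym V (d + p) * \prod_(i < p) (d%:R + i.+1%:R) <= _).
  apply: ler_wpM2r; last by rewrite mulrC; exact: N1.
  by apply: prodr_ge0 => i _; rewrite addr_ge0.
rewrite exprS -mulrA -mulrA; apply: ler_wpM2l; first exact: sig_ge0.
exact: IH.
Qed.

Lemma P2 (V : {set 'I_n}) j : esym V j * j`!%:R <= sigx V ^+ j.
Proof.
elim: j => [|j IH]; first by rewrite esym0 fact0 mulr1 expr0.
rewrite factS natrM mulrCA mulrA exprS.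
apply: le_trans (_ : sigx V * esym V j * j`!%:R <= _).
  by apply: ler_wpM2r => //; exact: N1.
by rewrite -mulrA; apply: ler_wpM2l => //; exact: sig_ge0.
Qed.

Lemma esym_gt0 (V : {set 'I_n}) l : l%:R <= sigx V -> 0 < esym V l.
Proof.
elim: l => [|l IH] hl; first by rewrite esym0.
have hl' : l%:R <= sigx V by apply: le_trans hl; rewrite ler_nat.
have := N2 V l; have := IH hl'.
have h1 : 0 < sigx V - l%:R.
  by rewrite subr_gt0; apply: lt_le_trans hl; rewrite ltr_nat.
move=> h2 h3.
have : 0 < l.+1%:R * esym V l.+1 by apply: lt_le_trans h3; exact: mulr_gt0.
by rewrite pmulr_rgt0 // ltr0n.
Qed.

Lemma decomp (T : {set 'I_n}) l : (#|T| <= l)%N ->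
  esym finset.setT l = \sum_(A : {set 'I_n} | A \subset T) (\prod_(i in A) x i) * esym (~: T) (l - #|A|).
Proof.
move=> Tl.
rewrite /esym (eq_bigl (fun S : {set 'I_n} => #|S| == l)); last by move=> S; rewrite finset.subsetT.
rewrite (partition_big (fun S => S :&: T) (fun A => A \subset T)) /=; last by move=> S _; exact: finset.subsetIr.
apply: eq_bigr => A AT; rewrite -/(esym _ _) inner //.
exact: leq_trans (fintype.subset_leq_card AT) Tl.
Qed.

Lemma decomp2 (T : {set 'I_n}) l : (#|T| <= l)%N ->
  esym finset.setT l = \sum_(j < #|T|.+1) esym T j * esym (~: T) (l - j).
Proof.
move=> Tl; rewrite (@decomp T l Tl).
rewrite (partition_big (fun A : {set 'I_n} => (inord #|A| : 'I_#|T|.+1)) xpredT) //=.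
apply: eq_bigr => j _; rewrite /esym mulr_suml; apply: eq_big => A.
  case AT: (A \subset T) => //=.
  have hA : (#|A| < #|T|.+1)%N by rewrite ltnS fintype.subset_leq_card.
  apply/eqP/eqP => [<-|E]; first by rewrite inordK.
  by apply: val_inj; rewrite /= inordK // E.
move=> /andP[AT /eqP cA]; rewrite -cA.
have hA : (#|A| < #|T|.+1)%N by rewrite ltnS fintype.subset_leq_card.
by rewrite inordK.
Qed.



Lemma comb (T : {set 'I_n}) k : (#|T| <= k)%N -> sigx finset.setT = k%:R ->
  esym finset.setT k <= expR #|T|%:R * esym (~: T) (k - #|T|).
Proof.
move=> mk sk.
set m := #|T|.
set U := ~: T. set t := sigx T. set s := sigx U.
have e : k%:R = t + s.
  by rewrite -sk /sigx (big_setID T) finset.setTI finset.setTD.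
have hs : s = (k - m)%:R + (m%:R - t) by rewrite natrB // e; ring.
have t0 : 0 <= t := sig_ge0 T.
have tm : t <= m%:R by exact: sig_le.
have u0 : 0 <= m%:R - t by rewrite subr_ge0.
rewrite (@decomp2 T k mk).
set C := expR (m%:R - t) * esym U (k - m).
have C0 : 0 <= C by rewrite mulr_ge0 ?expR_ge0 ?esym_ge0.
apply: le_trans (_ : \sum_(j < m.+1) t ^+ j / j`!%:R * C <= _).
  apply: ler_sum => j _.
  have jm : (j <= m)%N by rewrite -ltnS ltn_ord.
  apply: ler_pM; [exact: esym_ge0 | exact: esym_ge0 | |].
    have := P2 T j; rewrite ler_pdivlMr // ltr0n; exact: fact_gt0.
  have ekj : (k - j = (k - m) + (m - j))%N by rewrite addnBA // subnK.
  rewrite ekj.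
  have P0 : 0 < \prod_(i < m - j) ((k - m)%:R + i.+1%:R :> R).
    by apply: prodr_gt0 => i _; apply: ltr_wpDl.
  have h1 := P1 U (k - m) (m - j).
  have h2 := @G_bound R _ _ (m - j) (ler0n R (k - m)) u0.
  rewrite -hs in h2.
  rewrite -(ler_pM2r P0); apply: (le_trans h1).
  apply: le_trans (ler_wpM2r (esym_ge0 _ _) h2) _.
  by rewrite /C mulrAC.
rewrite -mulr_suml; apply: le_trans (ler_wpM2r C0 (@exp_partial R t m.+1 t0)) _.
by rewrite /C mulrA -expRD addrC subrK.
Qed.

End Comb.



Section Gram.
Variables (R : realType) (m : nat).

Lemma gram_ge0 p (h : 'I_p -> 'cV[R]_m) : p = m ->
  0 <= \det (\sum_(j < p) h j *m (h j)^T).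
Proof.
move=> pm; subst p.
pose N : 'M[R]_m := \matrix_(j, r) h j r 0.
have -> : \sum_(j < m) h j *m (h j)^T = N^T *m N.
  apply/matrixP => r s; rewrite summxE !mxE; apply: eq_bigr => j _.
  by rewrite !mxE big_ord1 !mxE.
by rewrite det_mulmx det_tr -expr2 sqr_ge0.
Qed.

End Gram.

Section Struct.
Context {R : realType} {m n : nat} (a : 'I_n -> 'cV[R]_m).

Definition Gm (c : 'I_n -> R) : 'M[R]_m := \sum_(i < n) c i *: (a i *m (a i)^T).
Definition Dc (c : 'I_n -> R) : R := \det (Gm c).

Definition beta (f : {ffun 'I_m -> 'I_n}) : R :=
  \sum_(s : 'S_m) (-1) ^+ s * \prod_(r < m) (a (f r) r 0 * a (f r) (s r) 0).

Lemma Gm_entry c r s : Gm c r s = \sum_(i < n) c i * (a i r 0 * a i s 0).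
Proof.
rewrite /Gm summxE; apply: eq_bigr => i _; by rewrite !mxE big_ord1 !mxE.
Qed.

Lemma Dc_expand c : Dc c = \sum_(f : {ffun 'I_m -> 'I_n}) (\prod_(r < m) c (f r)) * beta f.
Proof.
rewrite /Dc /determinant.
transitivity (\sum_(s : 'S_m) (-1) ^+ s * \sum_(f : {ffun 'I_m -> 'I_n})
   \prod_(r < m) (c (f r) * (a (f r) r 0 * a (f r) (s r) 0))).
  apply: eq_bigr => s _; congr (_ * _).
  rewrite (eq_bigr (fun r => \sum_(i < n) c i * (a i r 0 * a i (s r) 0))); last first.
    by move=> r _; exact: Gm_entry.
  exact: bigA_distr_bigA.
under eq_bigr => s _ do rewrite mulr_sumr.
rewrite exchange_big /=; apply: eq_bigr => f _.
rewrite /beta mulr_sumr; apply: eq_bigr => s _.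
by rewrite big_split /= mulrCA.
Qed.


Lemma beta_noninj (f : {ffun 'I_m -> 'I_n}) : ~~ injectiveb f -> beta f = 0.
Proof.
move=> /injectivePn [r1 [r2 ne12 e12]].
pose N : 'M[R]_m := \matrix_(r, s) a (f r) s 0.
have -> : beta f = (\prod_(r < m) a (f r) r 0) * \det N.
  rewrite /beta /determinant mulr_sumr; apply: eq_bigr => s _.
  rewrite big_split /= mulrCA; congr (_ * (_ * _)).
  by apply: eq_bigr => r _; rewrite mxE.
rewrite (determinant_alternate ne12) ?mulr0 // => s.
by rewrite !mxE e12.
Qed.

Definition imf (f : {ffun 'I_m -> 'I_n}) : {set 'I_n} := f @: (finset.setT : {set 'I_m}).

Lemma Dc_img c : Dc c = \sum_(f : {ffun 'I_m -> 'I_n}) (\prod_(i in imf f) c i) * beta f.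
Proof.
rewrite Dc_expand; apply: eq_bigr => f _.
case: (boolP (injectiveb f)) => [/injectiveP inj | ni]; last by rewrite beta_noninj // !mulr0.
rewrite /imf big_imset /=; last by move=> r1 r2 _ _; exact: inj.
by congr (_ * _); apply: eq_bigl => r; rewrite !inE.
Qed.

Definition alpha (T : {set 'I_n}) : R := \sum_(f : {ffun 'I_m -> 'I_n} | imf f == T) beta f.

Lemma Dc_alpha c : Dc c = \sum_(T : {set 'I_n}) (\prod_(i in T) c i) * alpha T.
Proof.
rewrite Dc_img (partition_big imf xpredT) //; apply: eq_bigr => T _.
by rewrite /alpha mulr_sumr; apply: eq_bigr => f /eqP <-.
Qed.

Lemma alpha_card (T : {set 'I_n}) : #|T| != m -> alpha T = 0.
Proof.
move=> cT; apply: big1 => f /eqP fT; apply: beta_noninj; apply/negP => /injectiveP inj.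
by move: cT; rewrite -fT /imf card_imset // finset.cardsT card_ord eqxx.
Qed.

Definition ind (T : {set 'I_n}) : 'I_n -> R := fun i => (i \in T)%:R.

Lemma Gm_ind (T : {set 'I_n}) : Gm (ind T) = \sum_(i in T) a i *m (a i)^T.
Proof.
rewrite /Gm [RHS]big_mkcond /=; apply: eq_bigr => i _; rewrite /ind.
by case: (i \in T); rewrite ?scale1r ?scale0r.
Qed.

Lemma Dc_ind_ge0 (T : {set 'I_n}) : #|T| = m -> 0 <= Dc (ind T).
Proof.
move=> cT; rewrite /Dc Gm_ind (big_enum_val (fun i => a i *m (a i)^T)).
have := @gram_ge0 R m #|T| (fun j => a (enum_val j)) cT; exact.
Qed.

Lemma prod_ind (T T' : {set 'I_n}) : \prod_(i in T') ind T i = (T' \subset T)%:R.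
Proof.
case: (boolP (T' \subset T)) => sub.
  by apply: big1 => i iT'; rewrite /ind (fintype.subsetP sub i iT').
have [i iT' niT] := fintype.subsetPn sub.
by rewrite (bigD1 i) //= /ind (negbTE niT) mul0r.
Qed.

Lemma alpha_ge0 (T : {set 'I_n}) : 0 <= alpha T.
Proof.
case: (eqVneq #|T| m) => cT; last by rewrite alpha_card.
have := @Dc_ind_ge0 T cT; rewrite Dc_alpha (bigD1 T) //= prod_ind fintype.subxx mul1r big1 ?addr0 //.
move=> T' ne; rewrite prod_ind; case: (boolP (T' \subset T)) => s; last by rewrite mul0r.
by rewrite alpha_card ?mulr0 // -cT ltn_eqF // fintype.proper_card // finset.properEneq ne s.
Qed.

End Struct.

Section Final.
Variables (R : realType) (m k n : nat).
Hypotheses (hm : (0 < m)%N) (hmk : (m <= k)%N) (hkn : (k <= n)%N).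
Variables (a : 'I_n -> 'cV[R]_m) (x : 'I_n -> R).
Hypothesis x01 : forall i, 0 <= x i <= 1.
Hypothesis xsum : \sum_(i < n) x i = k%:R.

Lemma detS_ind (S : {set 'I_n}) : detS a S = Dc a (ind S).
Proof. by rewrite /Dc Gm_ind. Qed.

Lemma detx_Dc : detx a x = Dc a x.
Proof. by []. Qed.

Lemma Dc_ge0 c : (forall i, 0 <= c i) -> 0 <= Dc a c.
Proof.
move=> c0; rewrite Dc_alpha; apply: sumr_ge0 => T _; apply: mulr_ge0.
  by apply: prodr_ge0 => i _.
exact: alpha_ge0.
Qed.

Lemma sigT : sigx x finset.setT = k%:R.
Proof. by rewrite -xsum /sigx; apply: eq_bigl => i; rewrite finset.in_setT. Qed.

Lemma Z_eq : \sum_(T : {set 'I_n} | #|T| == k) \prod_(i in T) x i = esym x finset.setT k.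
Proof. by rewrite /esym; apply: eq_bigl => S; rewrite finset.subsetT. Qed.

Lemma Z_gt0 : 0 < esym x finset.setT k.
Proof. by apply: esym_gt0 => //; rewrite sigT. Qed.

Lemma key : expR (- m%:R) * esym x finset.setT k * Dc a x <=
  \sum_(S : {set 'I_n} | #|S| == k) (\prod_(j in S) x j) * detS a S.
Proof.
set Z := esym x finset.setT k.
under eq_bigr => S _ do rewrite detS_ind Dc_alpha mulr_sumr.
rewrite exchange_big /= Dc_alpha mulr_sumr; apply: ler_sum => T _.
have e1 : \sum_(S : {set 'I_n} | #|S| == k)
    (\prod_(j in S) x j) * ((\prod_(i in T) ind S i) * alpha a T) =
  alpha a T * \sum_(S : {set 'I_n} | (#|S| == k) && (S :&: T == T)) \prod_(j in S) x j.
  rewrite mulr_sumr [RHS]big_mkcondr /=; apply: eq_bigr => S _.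
  rewrite prod_ind; have -> : (S :&: T == T) = (T \subset S).
    by apply/eqP/idP => [<-|/finset.setIidPr //]; exact: finset.subsetIl.
  by case: (T \subset S); rewrite /= ?mulr1n ?mulr0n ?mul1r ?mul0r ?mulr0 // mulrC.
rewrite e1.
case: (eqVneq #|T| m) => cT; last by rewrite alpha_card // !mulr0 mul0r.
rewrite inner //; last by rewrite cT.
rewrite (_ : expR (- m%:R) * Z * ((\prod_(i in T) x i) * alpha a T) =
  alpha a T * ((\prod_(i in T) x i) * (expR (- m%:R) * Z))); last by ring.
apply: ler_wpM2l; first exact: alpha_ge0.
apply: ler_wpM2l; first by apply: prodr_ge0 => i _; case/andP: (x01 i).
have h := @comb R n x x01 T k ltac:(by rewrite cT) sigT.
rewrite cT in h *.
apply: le_trans (ler_wpM2l (expR_ge0 _) h) _.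
by rewrite expRN mulrA mulVf ?mul1r // gt_eqF // expR_gt0.
Qed.

End Final.

Theorem theorem1 (R : realType) (m k n : nat)
    (hm : (0 < m)%N) (hmk : (m <= k)%N) (hkn : (k <= n)%N)
    (a : 'I_n -> 'cV[R]_m) (xh : 'I_n -> R) (wh : R)
    (hopt : relax_optimal k a xh wh) :
  (expR 1)^-1 * wstar k a <= mroot m (expected_det k a xh).
Proof.
case: hopt => [[hw hsum h01] hmax].
have key' := @key R m k n hmk a xh h01 hsum.
have Z0 := @Z_gt0 R k n xh h01 hsum.
have xh0 : forall i, 0 <= xh i by move=> i; case/andP: (h01 i).
have D0 : 0 <= Dc a xh := @Dc_ge0 R m n a xh xh0.
set Z := esym xh finset.setT k in key' Z0.
have m0 : (m%:R : R) != 0 by rewrite pnatr_eq0 -lt0n.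
have EE : expected_det k a xh =
    Z^-1 * \sum_(S : {set 'I_n} | #|S| == k) (\prod_(j in S) xh j) * detS a S.
  rewrite /expected_det /sample_prob Z_eq -/Z mulr_sumr; apply: eq_bigr => S _.
  by rewrite mulrAC mulrC.
have E0 : 0 <= expected_det k a xh.
  rewrite EE; apply: mulr_ge0; first by rewrite invr_ge0 ltW.
  apply: sumr_ge0 => S _; apply: mulr_ge0; first by apply: prodr_ge0.
  by rewrite detS_ind; apply: Dc_ge0 => i; rewrite /ind; case: (i \in S).
have hE : expR (- m%:R) * Dc a xh <= expected_det k a xh.
  rewrite EE (_ : expR (- m%:R) * Dc a xh = Z^-1 * (expR (- m%:R) * Z * Dc a xh)).
    by apply: ler_wpM2l => //; rewrite invr_ge0 ltW.
  by field; rewrite gt_eqF.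
have hroot : (expR 1)^-1 * mroot m (Dc a xh) <= mroot m (expected_det k a xh).
  apply: le_trans (_ : mroot m (expR (- m%:R) * Dc a xh) <= _).
    rewrite /mroot powRM ?expR_ge0 //.
    have -> : expR (- m%:R) `^ (m%:R^-1) = (expR 1)^-1 :> R.
      rewrite /powR expR_eq0 expRK -expRN; congr expR.
      by rewrite mulrN mulVf.
    by [].
  rewrite /mroot; apply: ge0_ler_powR; rewrite ?nnegrE ?invr_ge0 ?ler0n ?mulr_ge0 ?expR_ge0 //.
have hS : forall S : {set 'I_n}, #|S| == k -> mroot m (detS a S) <= wh.
  move=> S /eqP cS; apply: (hmax (ind S) (mroot m (detS a S))); split.
  - by rewrite detS_ind.
  - transitivity (\sum_(i in S) (1 : R)); last by rewrite sumr_const cS.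
    by rewrite [RHS]big_mkcond; apply: eq_bigr => i _; rewrite /ind; case: (i \in S).
  - by move=> i; rewrite /ind; case: (i \in S); rewrite ?ler01 ?lexx.
have hw' : wh <= expR 1 * mroot m (expected_det k a xh).
  apply: (le_trans hw); rewrite -/(Dc a xh).
  have := ler_wpM2l (expR_ge0 1) hroot.
  by rewrite mulrA mulfV ?mul1r // gt_eqF // expR_gt0.
have W : wstar k a <= expR 1 * mroot m (expected_det k a xh).
  apply: bigmax_le; first by rewrite mulr_ge0 ?expR_ge0 ?powR_ge0.
  by move=> S hS'; apply: le_trans (hS S hS') hw'.
have ei : 0 <= (expR 1 : R)^-1 by rewrite invr_ge0 expR_ge0.
apply: le_trans (ler_wpM2l ei W) _.
by rewrite mulrA mulVf ?mul1r // gt_eqF // expR_gt0.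
Qed.
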